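(* Suppose $n$ is even, $n_t=n_c=n/2$, and $W$ is the output of pair-switching rerandomization (PSRR) with threshold $a>0$ and tuning parameter $\gamma\ge 0$, assumed to terminate almost surely. Then for every $w\in\{0,1\}^n$ with $\sum_iw_i=n/2$, $P(W=w)=P(W=\mathbf 1-w)$; consequently $P(W_i=1)=P(W_i=0)=1/2$ for every $i$.
   Context: Covariates $X_1,\dots,X_n\in\mathbb R^p$ are fixed, with sample covariance matrix $S_{XX}=(n-1)^{-1}\sum_i(X_i-\overline X)(X_i-\overline X)^{\mathrm T}$ invertible, $\overline X=n^{-1}\sum_iX_i$. For an assignment $W\in\{0,1\}^n$ with $n_t$ ones, the Mahalanobis distance is $M(W)=n_t(1-n_t/n)(\overline X_t-\overline X_c)^{\mathrm T}S_{XX}^{-1}(\overline X_t-\overline X_c)$ with $\overline X_t=n_t^{-1}\sum_{i:W_i=1}X_i$, $\overline X_c=n_c^{-1}\sum_{i:W_i=0}X_i$. PSRR: draw $W^{(0)}$ uniformly among assignments with $n_t$ ones; set $t=0$, $M^{(0)}=M(W^{(0)})$. While $M^{(t)}>a$: choose uniformly at random one index $i$ with $W^{(t)}_i=1$ and one index $j$ with $W^{(t)}_j=0$, let $W^*$ be $W^{(t)}$ with entries $i,j$ swapped, $M^*=M(W^* )$; with probability $\min\{(M^{(t)}/M^* )^\gamma,1\}$ set $W^{(t+1)}=W^*$, $M^{(t+1)}=M^*$, $t\leftarrow t+1$ (otherwise keep the current state and try again). Output $W=W^{(t)}$ once $M^{(t)}\le a$. *)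

(* Defs.v *)
From HB Require Import structures.
From mathcomp Require Import all_boot all_order all_algebra.
From mathcomp Require Import all_classical all_reals all_analysis.
Set Implicit Arguments. Unset Strict Implicit. Unset Printing Implicit Defensive.
Import Order.TTheory GRing.Theory Num.Theory.
Import numFieldNormedType.Exports.
Local Open Scope ring_scope.

Section PSRR.
Context {R : realType} {n p : nat}.

(* An assignment W in {0,1}^n; W i = true means unit i is treated. *)
Definition assignment := {ffun 'I_n -> bool}.

Definition ntreated (w : assignment) : nat := #|[set i | w i]|.

Definition Xmean (X : 'M[R]_(n, p)) : 'rV[R]_p :=
  (n%:R)^-1 *: \sum_(i < n) row i X.

Definition Sxx (X : 'M[R]_(n, p)) : 'M[R]_p :=
  (n%:R - 1)^-1 *: \sum_(i < n) ((row i X - Xmean X)^T *m (row i X - Xmean X)).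

Definition Xbar_t (X : 'M[R]_(n, p)) (w : assignment) : 'rV[R]_p :=
  ((ntreated w)%:R)^-1 *: \sum_(i < n | w i) row i X.

Definition Xbar_c (X : 'M[R]_(n, p)) (w : assignment) : 'rV[R]_p :=
  ((n - ntreated w)%:R)^-1 *: \sum_(i < n | ~~ w i) row i X.

Definition mahal (X : 'M[R]_(n, p)) (w : assignment) : R :=
  let nt := (ntreated w)%:R in
  let d := Xbar_t X w - Xbar_c X w in
  nt * (1 - nt / n%:R) * (d *m invmx (Sxx X) *m d^T) 0 0.

Definition swap (w : assignment) (i j : 'I_n) : assignment :=
  [ffun k => if k == i then w j else if k == j then w i else w k].

(* acceptance probability min{(M/Mstar)^gamma, 1}; equals 1 when Mstar <= M
   (this also covers Mstar = 0, where the ratio is +infinity) *)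
Definition accept (gamma Mcur Mstar : R) : R :=
  if Mstar <= Mcur then 1 else powR (Mcur / Mstar) gamma.

(* One proposal/acceptance step of PSRR from state x (an "attempt"):
   choose i uniformly among treated, j uniformly among controls,
   move to swap x i j w.p. accept, otherwise stay at x. *)
Definition step_kernel (X : 'M[R]_(n, p)) (gamma : R) (nt : nat)
    (x y : assignment) : R :=
  let q := ((nt * (n - nt))%:R)^-1 in
  let P i j := q * accept gamma (mahal X x) (mahal X (swap x i j)) in
  \sum_(i < n | x i) \sum_(j < n | ~~ x j)
      (if swap x i j == y then P i j else 0)
  + (if x == y then 1 - \sum_(i < n | x i) \sum_(j < n | ~~ x j) P i j else 0).

Definition init_dist (nt : nat) (w : assignment) : R :=
  if ntreated w == nt then ('C(n, nt)%:R)^-1 else 0.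

(* sub-probability of being at state w after t attempts without having
   stopped before (the loop continues only while M > a) *)
Fixpoint alive_dist (X : 'M[R]_(n, p)) (gamma a : R) (nt : nat) (t : nat)
    (w : assignment) : R :=
  match t with
  | 0 => init_dist nt w
  | t'.+1 => \sum_(x : assignment | a < mahal X x)
               alive_dist X gamma a nt t' x * step_kernel X gamma nt x w
  end.

(* probability that the chain is still running after t attempts, P(T > t) *)
Definition running_prob (X : 'M[R]_(n, p)) (gamma a : R) (nt : nat) (t : nat) : R :=
  \sum_(x : assignment | a < mahal X x) alive_dist X gamma a nt t x.

(* P(W = w): probability that the output of PSRR equals w
   (the chain stops, for the first time, at w) *)
Definition psrr_prob (X : 'M[R]_(n, p)) (gamma a : R) (nt : nat)
    (w : assignment) : R :=
  if mahal X w <= a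
  then limn ((fun N : nat => \sum_(t < N) alive_dist X gamma a nt t w) : R^nat)
  else 0.

End PSRR.

(* Main.v *)
Require Import Defs.
From HB Require Import structures.
From mathcomp Require Import all_boot all_order all_algebra.
From mathcomp Require Import all_classical all_reals all_analysis.
From mathcomp Require Import perm zify ring lra.
Import Order.TTheory GRing.Theory Num.Theory.
Import numFieldNormedType.Exports.
Local Open Scope ring_scope.

Definition cmp {n} (w : @assignment n) : @assignment n := [ffun i => ~~ w i].

Lemma cmpK n (w : @assignment n) : cmp (cmp w) = w.
Proof. by apply/ffunP => i; rewrite !ffunE negbK. Qed.

Lemma cmp_inj n : injective (@cmp n).
Proof. exact: (can_inj (@cmpK n)). Qed.

Lemma ntreated_le n (w : @assignment n) : (ntreated w <= n)%N.
Proof. by rewrite /ntreated; apply: leq_trans (max_card _) _; rewrite card_ord. Qed.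

Lemma ntreated_cmp n (w : @assignment n) : ntreated (cmp w) = (n - ntreated w)%N.
Proof.
rewrite /ntreated.
have -> : [set i | cmp w i] = ~: [set i | w i].
  by apply/setP => i; rewrite !inE ffunE.
by have := cardsC [set i | w i]; rewrite card_ord; lia.
Qed.

Lemma swap_tperm n (x : @assignment n) i j : swap x i j = [ffun k => x (tperm i j k)].
Proof. by apply/ffunP => k; rewrite !ffunE permE /=; case: eqP => //; case: eqP. Qed.

Lemma ntreated_swap n (x : @assignment n) i j : ntreated (swap x i j) = ntreated x.
Proof.
rewrite /ntreated swap_tperm.
have -> : [set k | [ffun k => x (tperm i j k)] k] = (tperm i j) @^-1: [set k | x k].
  by apply/setP => k; rewrite !inE ffunE.
by rewrite card_preimset //; exact: perm_inj.
Qed.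

Lemma swap_cmp n (x : @assignment n) i j : cmp (swap x i j) = swap (cmp x) i j.
Proof. by apply/ffunP => k; rewrite !ffunE; case: ifP => _ //; case: ifP. Qed.

Lemma swapC n (x : @assignment n) i j : swap x i j = swap x j i.
Proof.
apply/ffunP => k; rewrite !ffunE.
by case: (eqVneq k i) => [->|ki]; case: (eqVneq i j) => [->|ij] //; rewrite ?eqxx ?(negbTE ij).
Qed.

Lemma Xbar_t_cmp (R : realType) n p (X : 'M[R]_(n, p)) w :
  Xbar_t X (cmp w) = Xbar_c X w.
Proof.
rewrite /Xbar_t /Xbar_c ntreated_cmp; congr (_ *: _).
by apply: eq_bigl => i; rewrite ffunE.
Qed.

Lemma Xbar_c_cmp (R : realType) n p (X : 'M[R]_(n, p)) w :
  Xbar_c X (cmp w) = Xbar_t X w.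
Proof.
rewrite /Xbar_t /Xbar_c ntreated_cmp subKn ?ntreated_le //; congr (_ *: _).
by apply: eq_bigl => i; rewrite ffunE negbK.
Qed.

Lemma mahal_cmp (R : realType) n p (X : 'M[R]_(n, p)) w :
  mahal X (cmp w) = mahal X w.
Proof.
rewrite /mahal Xbar_t_cmp Xbar_c_cmp ntreated_cmp.
rewrite -(opprB (Xbar_t X w)) linearN /= !mulNmx mulmxN opprK.
congr (_ * _).
have le := ntreated_le _ w.
rewrite natrB //.
case: (posnP n) => [n0|n0].
  have -> : ntreated w = 0%N by lia.
  by rewrite n0 subrr !mul0r.
have nz : (n%:R : R) != 0 by rewrite pnatr_eq0 -lt0n.
by field.
Qed.

Definition Sw {R : realType} {n} (x : @assignment n) (H : @assignment n -> R) : R :=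
  \sum_(i < n | x i) \sum_(j < n | ~~ x j) H (swap x i j).

Definition qq (R : realType) n (nt : nat) : R := ((nt * (n - nt))%:R)^-1.

Lemma eq_Sw (R : realType) n (x : @assignment n) (H1 H2 : @assignment n -> R) :
  (forall z, H1 z = H2 z) -> Sw x H1 = Sw x H2.
Proof. by move=> e; apply: eq_bigr => i _; apply: eq_bigr => j _. Qed.

Lemma kernelE (R : realType) n p (X : 'M[R]_(n, p)) g nt x y :
  step_kernel X g nt x y =
  Sw x (fun z => if z == y then qq R n nt * accept g (mahal X x) (mahal X z) else 0)
  + (if x == y then 1 - Sw x (fun z => qq R n nt * accept g (mahal X x) (mahal X z)) else 0).
Proof. by []. Qed.

Lemma Sw_cmp (R : realType) n (x : @assignment n) (H : @assignment n -> R) :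
  Sw (cmp x) H = Sw x (fun z => H (cmp z)).
Proof.
rewrite /Sw.
transitivity (\sum_(i < n | ~~ x i) \sum_(j < n | x j) H (cmp (swap x i j))).
  apply: eq_big => i; first by rewrite ffunE.
  move=> _; apply: eq_big => j; first by rewrite ffunE negbK.
  by rewrite swap_cmp.
rewrite exchange_big /=.
by apply: eq_bigr => i _; apply: eq_bigr => j _; rewrite swapC.
Qed.

Lemma kernel_cmp (R : realType) n p (X : 'M[R]_(n, p)) g nt x y :
  step_kernel X g nt (cmp x) (cmp y) = step_kernel X g nt x y.
Proof.
rewrite (kernelE _ _ _ X g nt x y) (kernelE _ _ _ X g nt (cmp x) (cmp y)).
rewrite !Sw_cmp (mahal_cmp _ _ _ X x) (inj_eq (@cmp_inj n) x y).
apply: f_equal2.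
  apply: eq_Sw => z.
  rewrite (mahal_cmp _ _ _ X z) (inj_eq (@cmp_inj n) z y); reflexivity.
case: (x == y); last reflexivity.
apply: f_equal2; first reflexivity.
apply: f_equal; apply: eq_Sw => z; rewrite (mahal_cmp _ _ _ X z); reflexivity.
Qed.

Lemma init_cmp (R : realType) n (w : @assignment n) :
  ~~ odd n -> @init_dist R n n./2 (cmp w) = @init_dist R n n./2 w.
Proof.
move=> ev; rewrite /init_dist ntreated_cmp.
have le := ntreated_le _ w.
have e2 : n = (n./2 + n./2)%N by rewrite addnn -[LHS]odd_double_half (negbTE ev).
suff -> : (n - ntreated w == n./2)%N = (ntreated w == n./2) by [].
apply/eqP/eqP; lia.
Qed.

Lemma alive_cmp (R : realType) n p (X : 'M[R]_(n, p)) g a t (w : @assignment n) :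
  ~~ odd n -> alive_dist X g a n./2 t (cmp w) = alive_dist X g a n./2 t w.
Proof.
move=> ev; elim: t w => [|t IH] w /=; first exact: init_cmp.
rewrite (reindex_inj (@cmp_inj n)) /=.
apply: eq_big => x.
  rewrite (mahal_cmp _ _ _ X x); reflexivity.
move=> _; rewrite IH (kernel_cmp _ _ _ X g n./2 x w); reflexivity.
Qed.

Lemma psrr_cmp (R : realType) n p (X : 'M[R]_(n, p)) g a (w : @assignment n) :
  ~~ odd n -> psrr_prob X g a n./2 (cmp w) = psrr_prob X g a n./2 w.
Proof.
move=> ev; rewrite /psrr_prob (mahal_cmp _ _ _ X w).
case: (mahal X w <= a); last reflexivity.
have E : (fun N : nat => \sum_(t < N) alive_dist X g a n./2 t (cmp w)) =
           (fun N : nat => \sum_(t < N) alive_dist X g a n./2 t w).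
  apply: funext => N; apply: eq_bigr => t _; exact: alive_cmp.
rewrite E; reflexivity.
Qed.

Lemma kernel_sum1 (R : realType) n p (X : 'M[R]_(n, p)) g nt x :
  \sum_y step_kernel X g nt x y = 1.
Proof.
under eq_bigr => y _ do rewrite (kernelE _ _ _ X g nt x y).
rewrite big_split /=.
set F := fun z => qq R n nt * accept g (mahal X x) (mahal X z).
have E1 : \sum_y Sw x (fun z => if z == y then F z else 0) = Sw x F.
  rewrite /Sw exchange_big /=; apply: eq_bigr => i _.
  rewrite exchange_big /=; apply: eq_bigr => j _.
  rewrite -big_mkcond /= (eq_bigl (fun y => y == swap x i j)); first exact: big_pred1_eq.
  move=> y; exact: eq_sym.
have E2 : \sum_y (if x == y then 1 - Sw x F else 0) = 1 - Sw x F.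
  rewrite -big_mkcond /=.
  rewrite (eq_bigl (fun y => y == x)); first exact: big_pred1_eq.
  move=> y; exact: eq_sym.
rewrite E1 E2 addrC subrK; reflexivity.
Qed.

Lemma accept_bnd (R : realType) (g Mc Ms : R) :
  0 < Mc -> 0 <= g -> 0 <= accept g Mc Ms <= 1.
Proof.
move=> Mc0 g0; rewrite /accept; case: ifPn => h; first by rewrite ler01 lexx.
rewrite powR_ge0 /=.
rewrite -ltNge in h.
have Ms0 : 0 < Ms by apply: lt_trans h.
have r01 : 0 < Mc / Ms <= 1.
  by rewrite divr_gt0 //= ler_pdivrMr // mul1r ltW.
by rewrite -[X in _ <= X](powRr0 (Mc / Ms)); apply: ger_powR.
Qed.

Lemma sum_cnt (R : realType) n (P : pred 'I_n) (c : R) :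
  \sum_(i < n | P i) c = c *+ #|[set i | P i]|.
Proof.
rewrite -sumr_const; apply: eq_bigl => i; by rewrite inE.
Qed.

Lemma Sw_le (R : realType) n (x : @assignment n) (H : @assignment n -> R) c :
  (forall z, H z <= c) -> Sw x H <= (c *+ (n - ntreated x)) *+ ntreated x.
Proof.
move=> Hc; rewrite /Sw /ntreated -(ntreated_cmp _ x) /ntreated.
have e : [set i | cmp x i] = [set i | ~~ x i] by apply/setP => i; rewrite !inE ffunE.
rewrite e -!sum_cnt.
apply: ler_sum => i _; apply: ler_sum => j _; exact: Hc.
Qed.

Lemma Sw_ge0 (R : realType) n (x : @assignment n) (H : @assignment n -> R) :
  (forall z, 0 <= H z) -> 0 <= Sw x H.
Proof. by move=> h; apply: sumr_ge0 => i _; apply: sumr_ge0 => j _. Qed.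

Lemma kernel_ge0 (R : realType) n p (X : 'M[R]_(n, p)) g nt x y :
  ntreated x = nt -> 0 < mahal X x -> 0 <= g -> 0 <= step_kernel X g nt x y.
Proof.
move=> hx hM hg; rewrite (kernelE _ _ _ X g nt x y).
have q0 : 0 <= qq R n nt by rewrite /qq invr_ge0 ler0n.
have hF : forall z, 0 <= qq R n nt * accept g (mahal X x) (mahal X z) <= qq R n nt.
  move=> z; have /andP[a0 a1] := accept_bnd _ _ _ (mahal X z) hM hg.
  by rewrite mulr_ge0 //= ler_piMr.
apply: addr_ge0.
  apply: Sw_ge0 => z; case: ifP => _; last exact: lexx.
  by case/andP: (hF z).
case: ifP => _; last exact: lexx.
rewrite subr_ge0.
apply: le_trans (Sw_le _ _ x _ (qq R n nt) _) _.
  by move=> z; case/andP: (hF z).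
rewrite hx -mulrnA /qq.
case: (posnP (nt * (n - nt))) => [->|hm]; first by rewrite invr0 mul0rn ler01.
by rewrite (mulnC (n - nt)%N) -(mulr_natr ((nt * (n - nt))%:R^-1)) mulVf // pnatr_eq0 -lt0n.
Qed.

Lemma kernel_0 (R : realType) n p (X : 'M[R]_(n, p)) g nt x y :
  ntreated x = nt -> ntreated y != nt -> step_kernel X g nt x y = 0.
Proof.
move=> hx hy; rewrite (kernelE _ _ _ X g nt x y).
have xy : (x == y) = false.
  by apply/negbTE; apply: contra hy => /eqP <-; rewrite hx.
rewrite xy addr0.
apply: big1 => i _; apply: big1 => j _.
have -> : (swap x i j == y) = false.
  by apply/negbTE; apply: contra hy => /eqP <-; rewrite ntreated_swap hx.
reflexivity.
Qed.

Lemma alive_props (R : realType) n p (X : 'M[R]_(n, p)) g a nt t :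
  0 < a -> 0 <= g -> forall w,
  0 <= alive_dist X g a nt t w /\ (ntreated w != nt -> alive_dist X g a nt t w = 0).
Proof.
move=> a0 g0; elim: t => [|t IH] w /=.
  rewrite /init_dist; case: ifP => h; split => //.
split.
  apply: sumr_ge0 => x hx.
  have [ax hz] := IH x.
  case: (eqVneq (ntreated x) nt) => e.
    apply: mulr_ge0 => //; apply: kernel_ge0 => //; exact: lt_trans hx.
  rewrite (hz e) mul0r; exact: lexx.
move=> hw; apply: big1 => x hx.
have [ax hz] := IH x.
case: (eqVneq (ntreated x) nt) => e.
  rewrite (kernel_0 _ _ _ X g nt x w e hw) mulr0; reflexivity.
rewrite (hz e) mul0r; reflexivity.
Qed.

Definition totalm {R : realType} {n p} (X : 'M[R]_(n, p)) g a nt t :=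
  \sum_w alive_dist X g a nt t w.

Definition stopm {R : realType} {n p} (X : 'M[R]_(n, p)) g a nt t :=
  \sum_(w | mahal X w <= a) alive_dist X g a nt t w.

Lemma total_S (R : realType) n p (X : 'M[R]_(n, p)) g a nt t :
  totalm X g a nt t.+1 = running_prob X g a nt t.
Proof.
rewrite /totalm /= exchange_big /=; apply: eq_bigr => x _.
rewrite -mulr_sumr (kernel_sum1 _ _ _ X g nt x) mulr1; reflexivity.
Qed.

Lemma total_split (R : realType) n p (X : 'M[R]_(n, p)) g a nt t :
  totalm X g a nt t = stopm X g a nt t + running_prob X g a nt t.
Proof.
rewrite /totalm (bigID (fun w => a < mahal X w)) /= addrC; congr (_ + _).
apply: eq_bigl => w; rewrite -leNgt; reflexivity.
Qed.

Lemma ntreated_set n (A : {set 'I_n}) : ntreated ([ffun i => i \in A] : @assignment n) = #|A|.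
Proof.
rewrite /ntreated; apply: eq_card => i; rewrite inE ffunE; reflexivity.
Qed.

Lemma total0 (R : realType) n p (X : 'M[R]_(n, p)) g a nt :
  (nt <= n)%N -> totalm X g a nt 0 = 1.
Proof.
move=> le; rewrite /totalm /=.
pose h (A : {set 'I_n}) : @assignment n := [ffun i => i \in A].
have hb : bijective h.
  exists (fun w : @assignment n => [set i | w i]).
    by move=> A; apply/setP => i; rewrite inE ffunE.
  by move=> w; apply/ffunP => i; rewrite ffunE inE.
rewrite (reindex h); last by apply: onW_bij.
rewrite /init_dist.
under eq_bigr do rewrite ntreated_set.
rewrite -big_mkcond /=.
rewrite (eq_bigl (fun A => A \in [set A : {set 'I_n} | #|A| == nt])); last by move=> A; rewrite inE.
rewrite sumr_const card_draws card_ord.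
by rewrite -(mulr_natr ('C(n, nt)%:R^-1)) mulVf // pnatr_eq0 -lt0n bin_gt0.
Qed.

Lemma telesc (R : realType) n p (X : 'M[R]_(n, p)) g a nt N :
  (nt <= n)%N -> \sum_(t < N) stopm X g a nt t = 1 - totalm X g a nt N.
Proof.
move=> le; elim: N => [|N IH].
  rewrite big_ord0 (total0 _ _ _ X g a nt le) subrr; reflexivity.
rewrite big_ord_recr /= IH (total_split _ _ _ X g a nt N) (total_S _ _ _ X g a nt N).
set s := stopm X g a nt N; set r := running_prob X g a nt N.
ring.
Qed.

Lemma total_ge0 (R : realType) n p (X : 'M[R]_(n, p)) g a nt N :
  0 < a -> 0 <= g -> 0 <= totalm X g a nt N.
Proof.
move=> a0 g0; apply: sumr_ge0 => w _; by case: (alive_props _ _ _ X g a nt N a0 g0 w).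
Qed.

Lemma psrr_total (R : realType) n p (X : 'M[R]_(n, p)) g a nt :
  (nt <= n)%N -> 0 < a -> 0 <= g ->
  (running_prob X g a nt t @[t --> \oo] --> 0)%classic ->
  \sum_w psrr_prob X g a nt w = 1.
Proof.
move=> le a0 g0 hr.
pose part (w : @assignment n) : R^nat := fun N => \sum_(t < N) alive_dist X g a nt t w.
have mono : forall w, nondecreasing_seq (part w).
  move=> w; apply/nondecreasing_seqP => N.
  rewrite /part big_ord_recr /= lerDl.
  by case: (alive_props _ _ _ X g a nt N a0 g0 w).
have sumE : forall N, \sum_(w | mahal X w <= a) part w N = 1 - totalm X g a nt N.
  move=> N; rewrite -(telesc _ _ _ X g a nt N le) /part exchange_big /=.
  apply: eq_bigr => t _; reflexivity.
have bnd : forall w, mahal X w <= a -> forall N, part w N <= 1.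
  move=> w hw N.
  apply: le_trans (_ : \sum_(w' | mahal X w' <= a) part w' N <= 1).
    rewrite (bigD1 w) //= lerDl.
    apply: sumr_ge0 => w' _; apply: sumr_ge0 => t _.
    by case: (alive_props _ _ _ X g a nt t a0 g0 w').
  by rewrite sumE gerBl total_ge0.
have cv : forall w, mahal X w <= a -> cvgn (part w).
  move=> w hw; apply: nondecreasing_is_cvgn; first exact: mono.
  by exists 1 => _ [N _ <-]; apply: bnd.
have tot0 : (totalm X g a nt N @[N --> \oo] --> 0)%classic.
  rewrite -cvg_shiftS.
  have -> : [sequence totalm X g a nt n0.+1]_n0 = (fun N => running_prob X g a nt N).
    by apply: funext => N /=; rewrite total_S.
  exact: hr.
have H1 : ((\sum_(w | mahal X w <= a) part w N) @[N --> \oo] -->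
           \sum_(w | mahal X w <= a) limn (part w))%classic.
  apply: cvg_big => //; first exact: add_continuous.
have H2 : ((\sum_(w | mahal X w <= a) part w N) @[N --> \oo] --> (1:R))%classic.
  have -> : (fun N => \sum_(w | mahal X w <= a) part w N) = (fun N => 1 - totalm X g a nt N).
    by apply: funext => N; rewrite sumE.
  have := @cvgB R R nat (\oo)%classic _ (fun=> (1:R)) (totalm X g a nt) 1 0 (cvg_cst _) tot0.
  rewrite subr0; exact.
have E : \sum_(w | mahal X w <= a) limn (part w) = 1.
  exact: (cvg_unique (@Rhausdorff R) H1 H2).
rewrite -E (bigID (fun w => mahal X w <= a)) /= [Y in _ + Y]big1 ?addr0.
  apply: eq_bigr => w hw; rewrite /psrr_prob hw; reflexivity.
move=> w hw; rewrite /psrr_prob (negbTE hw); reflexivity.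
Qed.

Local Open Scope classical_set_scope.
Theorem mainTheorem3 (R : realType) (n p : nat) (X : 'M[R]_(n, p))
    (a gamma : R) :
  ~~ odd n ->
  Sxx X \in unitmx ->
  0 < a -> 0 <= gamma ->
  (* PSRR terminates almost surely: P(T > t) -> 0 *)
  running_prob X gamma a n./2 t @[t --> \oo] --> 0 ->
  (forall w : @assignment n, ntreated w = n./2 ->
     psrr_prob X gamma a n./2 w
     = psrr_prob X gamma a n./2 [ffun i => ~~ w i])
  /\
  (forall i : 'I_n,
     \sum_(w : @assignment n | w i) psrr_prob X gamma a n./2 w = 1 / 2
     /\ \sum_(w : @assignment n | ~~ w i) psrr_prob X gamma a n./2 w = 1 / 2).
Proof.
move=> ev _ a0 g0 hr; split.
  move=> w _; exact: (esym (psrr_cmp _ _ _ X gamma a w ev)).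
move=> i.
have le : (n./2 <= n)%N.
  apply: leq_trans (half_leq (leq_addr n n)) _; rewrite addnn doubleK; exact: leqnn.
have T := psrr_total _ _ _ X gamma a n./2 le a0 g0 hr.
rewrite (bigID (fun w : @assignment n => w i)) /= in T.
have S : \sum_(w : @assignment n | w i) psrr_prob X gamma a n./2 w
       = \sum_(w : @assignment n | ~~ w i) psrr_prob X gamma a n./2 w.
  rewrite [RHS](reindex_inj (@cmp_inj n)) /=.
  apply: eq_big => w.
    rewrite ffunE negbK; reflexivity.
  move=> _; exact: (esym (psrr_cmp _ _ _ X gamma a w ev)).
move: T S.
set A := \sum_(w : @assignment n | w i) _; set B := \sum_(w : @assignment n | ~~ w i) _.
move=> T S; split; lra.
Qed.
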